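(* Let $a,b>0$ with $a\in[30,\tfrac43b]$. Then $$\Big|\mathbb E_{x\sim\mathcal N(b,1)}\big[-\tfrac12\tanh''(ax)a^2+\tanh'(ax)ax\big]\Big|\le0.01.$$ *)

(* Defs.v *)
From Stdlib Require Import Reals.
From Coquelicot Require Import Coquelicot.
Open Scope R_scope.

Definition gauss_pdf (b x : R) : R := exp (- (x - b) ^ 2 / 2) / sqrt (2 * PI).

Definition F5_fun (a x : R) : R :=
  - / 2 * Derive_n tanh 2 (a * x) * a ^ 2 + Derive tanh (a * x) * a * x.

Definition F5_integrand (a b x : R) : R := F5_fun a x * gauss_pdf b x.

(* Main.v *)
Require Import Defs.
From Stdlib Require Import Reals Lra Psatz FunctionalExtensionality.
From Coquelicot Require Import Coquelicot.
Open Scope R_scope.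
Definition cc (y : R) := exp y + exp (- y).
Definition T1 (y : R) := 4 / (cc y) ^ 2.
Definition T2 (y : R) := -8 * (exp y - exp (- y)) / (cc y) ^ 3.
Lemma dom_gen (f G H : R -> R) (la lb : R) :
  (forall x, continuous f x) ->
  (forall x, is_derive H x (G x)) ->
  (forall x, continuous G x) ->
  (forall x, Rabs (f x) <= G x) ->
  filterlim H (Rbar_locally m_infty) (locally la) ->
  filterlim H (Rbar_locally p_infty) (locally lb) ->
  exists v, is_RInt_gen f (Rbar_locally m_infty) (Rbar_locally p_infty) v
    /\ Rabs v <= lb - la.
Proof.
  intros fc dH Gc fG Hl Hr.
  set (F := fun x => RInt f 0 x).
  assert (exf : forall u v, ex_RInt f u v).
  { intros u v; apply (ex_RInt_continuous (V := R_CompleteNormedModule)); intros; apply fc. }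
  assert (Fuv : forall u v, RInt f u v = F v - F u).
  { intros u v; unfold F; cbv beta. rewrite <- (RInt_Chasles f 0 u v) by auto.
    unfold plus; simpl. generalize (RInt f 0 u) (RInt f u v). intros p q. simpl in p, q. change (q = p + q - p)%R. ring. }
  assert (key0 : forall u v, u <= v -> Rabs (F v - F u) <= H v - H u).
  { intros u v uv. rewrite <- Fuv.
    apply (norm_RInt_le f G u v (RInt f u v) (minus (H v) (H u)));
      [exact uv | intros; apply fG | apply (RInt_correct (V := R_CompleteNormedModule)); auto | apply (is_RInt_derive (V := R_CompleteNormedModule)); intros; auto]. }
  assert (key : forall u v, Rabs (F v - F u) <= Rabs (H v - H u)).
  { intros u v. destruct (Rle_dec u v).
    - eapply Rle_trans. apply key0; auto. apply Rle_abs.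
    - rewrite Rabs_minus_sym, (Rabs_minus_sym (H v)).
      eapply Rle_trans. apply key0; lra. apply Rle_abs. }
  assert (derF : forall x, is_derive F x (f x)).
  { intros x. apply is_derive_RInt with 0.
    apply filter_forall; intros; apply (RInt_correct (V := R_CompleteNormedModule)); auto. apply fc. }
  assert (cauchy : forall (z : Rbar) l, filterlim H (Rbar_locally z) (locally l) ->
            exists y, filterlim F (Rbar_locally z) (locally y)).
  { intros z l Hz.
    apply (filterlim_locally_cauchy (F := Rbar_locally z)).
    intros eps.
    pose proof (proj1 (filterlim_locally H l) Hz (pos_div_2 eps)) as P.
    exists (fun x => ball l (pos_div_2 eps) (H x)). split; auto.
    intros u v Pu Pv. unfold ball in *; simpl in *. unfold AbsRing_ball in *.
    unfold abs, minus, plus, opp in *; simpl in *.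
    eapply Rle_lt_trans. apply key.
    apply Rabs_def2 in Pu; apply Rabs_def2 in Pv. apply Rabs_def1; simpl in *; lra. }
  destruct (cauchy _ _ Hl) as [yl Fl].
  destruct (cauchy _ _ Hr) as [yr Fr].
  assert (DF : forall x, Derive F x = f x).
  { intros; apply is_derive_unique, derF. }
  assert (DH : forall x, Derive H x = G x).
  { intros; apply is_derive_unique, dH. }
  assert (IF : is_RInt_gen f (Rbar_locally m_infty) (Rbar_locally p_infty) (yr - yl)).
  { apply (is_RInt_gen_ext (Derive F)).
    - apply filter_forall; intros; apply DF.
    - apply is_RInt_gen_Derive; auto.
      + apply filter_forall; intros; eexists; apply derF.
      + apply filter_forall; intros. apply (continuous_ext f). intros; symmetry; apply DF. apply fc. }
  assert (IG : is_RInt_gen G (Rbar_locally m_infty) (Rbar_locally p_infty) (lb - la)).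
  { apply (is_RInt_gen_ext (Derive H)).
    - apply filter_forall; intros; apply DH.
    - apply is_RInt_gen_Derive; auto.
      + apply filter_forall; intros; eexists; apply dH.
      + apply filter_forall; intros. apply (continuous_ext G). intros; symmetry; apply DH. apply Gc. }
  exists (yr - yl); split; auto.
  refine (RInt_gen_norm (V := R_CompleteNormedModule) f G (yr - yl) (lb - la) _ _ IF IG).
  - apply (Filter_prod _ _ _ (fun x => x < 0) (fun y => 0 < y)).
    + simpl; exists 0; auto.
    + simpl; exists 0; auto.
    + intros x y; simpl; lra.
  - apply filter_forall; intros; apply fG.
Qed.
Lemma exp_ge1 y : 1 + y <= exp y.
Proof. destruct (Req_dec y 0). subst; rewrite exp_0; lra. left; apply exp_ineq1; auto. Qed.

Lemma Hlim_p M : 0 <= M ->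
  filterlim (fun x => - M / (1 + exp (2 * x))) (Rbar_locally p_infty) (locally 0).
Proof.
  intros HM. apply filterlim_locally. intros eps. simpl. exists (M / eps).
  intros x Hx. unfold ball; simpl; unfold AbsRing_ball, abs, minus, plus, opp; simpl.
  pose proof (cond_pos eps) as ep.
  pose proof (exp_ge1 (2 * x)) as E.
  assert (0 <= M / eps) by (apply Rdiv_le_0_compat; lra).
  assert (M < eps * (1 + exp (2 * x))).
  { assert (M / eps * eps = M) by (field; lra). nra. }
  replace (- M / (1 + exp (2 * x)) + - 0) with (- (M / (1 + exp (2 * x)))) by (field; lra).
  assert (0 <= M / (1 + exp (2 * x))) by (apply Rdiv_le_0_compat; lra).
  rewrite Rabs_left1 by lra. rewrite Ropp_involutive.
  unfold Rdiv. apply Rmult_lt_reg_r with (1 + exp (2*x)). lra.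
  rewrite Rmult_assoc, Rinv_l by lra. lra.
Qed.

Lemma Hlim_m M : 0 <= M ->
  filterlim (fun x => - M / (1 + exp (2 * x))) (Rbar_locally m_infty) (locally (- M)).
Proof.
  intros HM. apply filterlim_locally. intros eps. simpl. exists (- (M / eps) - 1).
  intros x Hx. unfold ball; simpl; unfold AbsRing_ball, abs, minus, plus, opp; simpl.
  pose proof (cond_pos eps) as ep.
  pose proof (exp_ge1 (- 2 * x)) as E.
  assert (0 <= M / eps) by (apply Rdiv_le_0_compat; lra).
  assert (Ep : 0 < exp (2 * x)) by apply exp_pos.
  assert (EE : exp (2 * x) * exp (- 2 * x) = 1).
  { rewrite <- exp_plus. replace (2 * x + -2 * x) with 0 by ring. apply exp_0. }
  assert (M * exp (2 * x) < eps).
  { assert (M / eps * eps = M) by (field; lra). nra. }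
  replace (- M / (1 + exp (2 * x)) + - - M) with (M * exp (2 * x) / (1 + exp (2 * x)))
    by (field; lra).
  rewrite Rabs_right.
  - apply Rle_lt_trans with (M * exp (2 * x)); auto.
    unfold Rdiv. rewrite <- (Rmult_1_r (M * exp (2 * x))) at 2.
    apply Rmult_le_compat_l. nra.
    rewrite <- Rinv_1. apply Rinv_le_contravar; lra.
  - apply Rle_ge, Rdiv_le_0_compat; nra.
Qed.
Lemma cc_pos y : 0 < cc y.
Proof. unfold cc; pose proof (exp_pos y); pose proof (exp_pos (-y)); lra. Qed.

Lemma d_tanh y : is_derive tanh y (T1 y).
Proof.
  unfold tanh, sinh, cosh, T1.
  pose proof (cc_pos y) as H; unfold cc in H.
  auto_derive. lra.
  unfold cc. rewrite exp_Ropp in *. pose proof (exp_pos y).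
  field. split; nra.
Qed.

Lemma d_T1 y : is_derive T1 y (T2 y).
Proof.
  unfold T1, T2.
  pose proof (cc_pos y) as H; unfold cc in *.
  pose proof (exp_pos y); pose proof (exp_pos (-y)).
  auto_derive. nra.
  rewrite exp_Ropp in *. field. split; nra.
Qed.

Lemma Derive_tanh : Derive tanh = T1.
Proof. apply functional_extensionality; intros; apply is_derive_unique, d_tanh. Qed.

Lemma Derive2_tanh y : Derive_n tanh 2 y = T2 y.
Proof.
  simpl. rewrite (Derive_ext _ T1). apply is_derive_unique, d_T1.
  intros; apply is_derive_unique, d_tanh.
Qed.
Lemma exp_le_exp x y : x <= y -> exp x <= exp y.
Proof. intros h; destruct h. left; apply exp_increasing; auto. subst; lra. Qed.

Lemma sqrt2pi_ge1 : 1 <= sqrt (2 * PI).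
Proof. rewrite <- sqrt_1. apply sqrt_le_1_alt. pose proof PI_RGT_0. pose proof PI2_3_2. lra. Qed.

Lemma cont_int a b x :
  continuous (fun x => (-/2 * T2 (a*x) * a^2 + T1 (a*x) * a * x) * gauss_pdf b x) x.
Proof.
  apply (ex_derive_continuous (K := R_AbsRing) (V := R_NormedModule)). unfold T1, T2, cc, gauss_pdf.
  pose proof (exp_pos (a*x)); pose proof (exp_pos (-(a*x))). pose proof sqrt2pi_ge1.
  auto_derive. repeat split; apply Rgt_not_eq; repeat apply Rmult_lt_0_compat; lra.
Qed.

Lemma div_le_div x y z w : 0 < y -> 0 < w -> x * w <= z * y -> x / y <= z / w.
Proof.
  intros hy hw h.
  replace (x / y) with (x * w * / (y * w)) by (field; split; lra).
  replace (z / w) with (z * y * / (y * w)) by (field; split; lra).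
  apply Rmult_le_compat_r; auto. left; apply Rinv_0_lt_compat, Rmult_lt_0_compat; auto.
Qed.

Lemma pt_bound a b x : 30 <= a -> a <= 4/3 * b ->
  Rabs ((-/2 * T2 (a*x) * a^2 + T1 (a*x) * a * x) * gauss_pdf b x)
  <= 2 * (8 * a^2 * exp (- (a^2 / 4))) * exp (2 * x) / (1 + exp (2 * x)) ^ 2.
Proof.
  intros ha hab.
  set (t := Rabs x).
  set (E := exp (a * x)). set (Ei := exp (- (a * x))).
  assert (Ep : 0 < E) by apply exp_pos. assert (Eip : 0 < Ei) by apply exp_pos.
  set (c := E + Ei).
  assert (cp : 0 < c) by (unfold c; lra).
  assert (ht : 0 <= t) by apply Rabs_pos.
  assert (hc : exp (a * t) <= c).
  { unfold t. destruct (Rle_dec 0 x).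
    - rewrite Rabs_right by lra. change (E <= c). unfold c; lra.
    - rewrite Rabs_left by lra. replace (a * - x) with (- (a * x)) by ring.
      change (Ei <= c). unfold c; lra. }
  assert (hf : - /2 * T2 (a*x) * a^2 + T1 (a*x) * a * x
               = (4 * a / c ^ 2) * (a * ((E - Ei) / c) + x)).
  { unfold T1, T2, cc. fold E Ei c. field. lra. }
  assert (hu : Rabs ((E - Ei) / c) <= 1).
  { unfold Rdiv. rewrite Rabs_mult, Rabs_inv, (Rabs_right c) by lra.
    apply Rmult_le_reg_r with c; auto. rewrite Rmult_assoc, Rinv_l by lra.
    rewrite Rmult_1_r, Rmult_1_l. apply Rabs_le; unfold c; split; lra. }
  assert (hf2 : Rabs (- /2 * T2 (a*x) * a^2 + T1 (a*x) * a * x) <= 4 * a / c ^ 2 * (a + t)).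
  { rewrite hf, Rabs_mult, (Rabs_right (4 * a / c ^ 2)).
    2: { apply Rle_ge, Rdiv_le_0_compat; nra. }
    apply Rmult_le_compat_l. apply Rdiv_le_0_compat; nra.
    eapply Rle_trans. apply Rabs_triang. rewrite Rabs_mult, (Rabs_right a) by lra.
    unfold t. nra. }
  set (g := exp (- (x - b) ^ 2 / 2)).
  assert (gp : 0 < g) by apply exp_pos.
  assert (hg : 0 <= gauss_pdf b x <= g).
  { unfold gauss_pdf. fold g. pose proof sqrt2pi_ge1.
    assert (/ sqrt (2 * PI) <= 1).
    { rewrite <- Rinv_1. apply Rinv_le_contravar; lra. }
    assert (0 < / sqrt (2 * PI)) by (apply Rinv_0_lt_compat; lra).
    unfold Rdiv; split; nra. }
  set (et := exp t). set (eta := exp (a * t)). set (K := exp (- (a ^ 2 / 4))).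
  set (e2 := exp (2 * x)).
  assert (etp : 0 < et) by apply exp_pos.
  assert (etap : 0 < eta) by apply exp_pos.
  assert (Kp : 0 < K) by apply exp_pos.
  assert (e2p : 0 < e2) by apply exp_pos.
  assert (h1 : a + t <= a * et).
  { pose proof (exp_ge1 t). fold et in H. nra. }
  assert (h2 : g * (et * et * et) <= K * (eta * eta)).
  { unfold g, et, eta, K. rewrite <- !exp_plus. apply exp_le_exp.
    unfold t; destruct (Rle_dec 0 x).
    - rewrite Rabs_right by lra.
      assert (0 <= (x - b + a) ^ 2) by apply pow2_ge_0.
      assert (3 / 4 * a ^ 2 <= a * b) by nra.
      assert (0 <= (a - 3) * x) by nra. nra.
    - rewrite Rabs_left by lra.
      assert (b >= 3 / 4 * a) by lra.
      assert (9 / 16 * a ^ 2 <= b ^ 2) by nra.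
      assert (0 <= (2 * a - 3) * (- x)) by nra.
      assert (b ^ 2 <= (x - b) ^ 2) by nra. nra. }
  assert (h3 : (1 + e2) ^ 2 <= 4 * e2 * (et * et)).
  { unfold e2, et, t. replace (2 * x) with (x + x) by ring. rewrite exp_plus.
    pose proof (exp_pos x). destruct (Rle_dec 0 x).
    - rewrite Rabs_right by lra. assert (1 <= exp x).
      { rewrite <- exp_0. apply exp_le_exp; lra. }
      assert (0 <= (exp x * exp x - 1) * (3 * (exp x * exp x) + 1)) by (apply Rmult_le_pos; nra).
      nra.
    - rewrite Rabs_left by lra. assert (exp x <= 1).
      { rewrite <- exp_0. apply exp_le_exp; lra. }
      assert (Hxx : exp x * exp (- x) = 1) by (rewrite <- exp_plus; replace (x + - x) with 0 by ring; apply exp_0).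
      replace (4 * (exp x * exp x) * (exp (- x) * exp (- x))) with (4 * ((exp x * exp (- x)) * (exp x * exp (- x)))) by ring.
      rewrite Hxx.
      assert (0 <= exp x * exp x <= 1) by (split; nra). nra. }
  assert (h4 : eta * eta <= c ^ 2) by (change (eta <= c) in hc; replace (c ^ 2) with (c * c) by ring; apply Rmult_le_compat; lra).
  rewrite Rabs_mult, (Rabs_right (gauss_pdf b x)) by lra.
  apply Rle_trans with (4 * a / c ^ 2 * (a + t) * g).
  { apply Rmult_le_compat; try lra. apply Rabs_pos. }
  replace (4 * a / c ^ 2 * (a + t) * g) with (4 * a * (a + t) * g / c ^ 2) by (field; lra).
  fold K e2.
  apply div_le_div. nra. nra.
  assert (0 <= a + t) by lra.
  assert (4 * a * (a + t) * g * (1 + e2) ^ 2 <= 4 * a * (a * et) * g * (4 * e2 * (et * et))).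
  { apply Rmult_le_compat.
    - apply Rmult_le_pos; [apply Rmult_le_pos|]; lra.
    - apply pow2_ge_0.
    - apply Rmult_le_compat_r; [lra|]. apply Rmult_le_compat_l; lra.
    - exact h3. }
  assert (4 * a * (a * et) * g * (4 * e2 * (et * et)) = 16 * a ^ 2 * e2 * (g * (et * et * et))) by ring.
  assert (16 * a ^ 2 * e2 * (g * (et * et * et)) <= 16 * a ^ 2 * e2 * (K * c ^ 2)).
  { apply Rmult_le_compat_l. nra. nra. }
  nra.
Qed.

Lemma M_small a : 30 <= a -> 8 * a ^ 2 * exp (- (a ^ 2 / 4)) <= 0.01.
Proof.
  intros ha.
  set (y := a ^ 2 / 16).
  assert (hy : 56 <= y) by (unfold y; nra).
  assert (e1 : y <= exp y) by (pose proof (exp_ge1 y); lra).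
  assert (e4 : exp (a ^ 2 / 4) = exp y * exp y * exp y * exp y).
  { rewrite <- !exp_plus. f_equal. unfold y; field. }
  rewrite exp_Ropp, e4.
  assert (0 < exp y) by apply exp_pos.
  assert (y * y * y * y <= exp y * exp y * exp y * exp y).
  { assert (0 <= y) by lra.
    repeat apply Rmult_le_compat; try lra; repeat apply Rmult_le_pos; lra. }
  assert (y * y >= 3136) by nra. assert (y * y * y >= 175616) by nra. assert (12800 * y <= y * y * y * y) by nra.
  assert (Ha8 : 8 * a ^ 2 = 128 * y) by (unfold y; field).
  rewrite Ha8.
  assert (0 < exp y * exp y * exp y * exp y) by (repeat apply Rmult_lt_0_compat; lra).
  apply Rmult_le_reg_r with (exp y * exp y * exp y * exp y); auto.
  rewrite Rmult_assoc, Rinv_l by lra. nra.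
Qed.

Theorem lemmaF5 (a b : R) (ha : 0 < a) (hb : 0 < b)
  (ha30 : 30 <= a) (hab : a <= 4 / 3 * b) :
  exists v : R,
    is_RInt_gen (F5_integrand a b) (Rbar_locally m_infty) (Rbar_locally p_infty) v
    /\ Rabs v <= 0.01.
Proof.
  set (M := 8 * a ^ 2 * exp (- (a ^ 2 / 4))).
  assert (Mp : 0 <= M) by (unfold M; pose proof (exp_pos (- (a ^ 2 / 4))); nra).
  assert (eqI : F5_integrand a b =
    (fun x => (-/2 * T2 (a*x) * a^2 + T1 (a*x) * a * x) * gauss_pdf b x)).
  { apply functional_extensionality; intros x.
    unfold F5_integrand, F5_fun. rewrite Derive2_tanh, Derive_tanh. reflexivity. }
  destruct (dom_gen (F5_integrand a b)
     (fun x => 2 * M * exp (2 * x) / (1 + exp (2 * x)) ^ 2)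
     (fun x => - M / (1 + exp (2 * x))) (- M) 0) as [v [Hv Hb]].
  - intros x; rewrite eqI; apply cont_int.
  - intros x. pose proof (exp_pos (2 * x)). auto_derive. lra. field. lra.
  - intros x. apply (ex_derive_continuous (K := R_AbsRing) (V := R_NormedModule)).
    pose proof (exp_pos (2 * x)). auto_derive. apply Rgt_not_eq; apply Rmult_lt_0_compat; [|apply Rmult_lt_0_compat]; lra.
  - intros x. rewrite eqI. apply pt_bound; auto.
  - apply Hlim_m; auto.
  - apply Hlim_p; auto.
  - exists v; split; auto. pose proof (M_small a ha30). fold M in H. lra.
Qed.
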